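(* Let $f$ be a multiplicative function from the positive integers to the nonnegative integers with $f(p^{k-1})\le f(p^k)$ for all primes $p$ and integers $k\ge1$. Then $f$ is convenient if and only if the following holds: for every prime $p$ and every $f$-practical positive integer $m$ with $\gcd(m,p)=1$, the inequality $f(p)\le S_f(m)+1$ implies $f(p^{k+1})\le S_f(mp^k)+1$ for every integer $k\ge0$.
   Context: $f$ multiplicative means $f(1)=1$ and $f(ab)=f(a)f(b)$ for coprime $a,b$. $S_f(n)=\sum_{d\mid n} f(d)$. A positive integer $n$ is $f$-practical if every positive integer $m\le S_f(n)$ equals $\sum_{d\in\mathcal{D}}f(d)$ for some set $\mathcal{D}$ of distinct divisors of $n$. Write $n=p_1^{e_1}\cdots p_k^{e_k}$ with distinct primes ordered so that $f(p_1)\le\cdots\le f(p_k)$, and let $m_i=\prod_{j=1}^{i}p_j^{e_j}$ for $0\le i<k$ ($m_0=1$); $n$ is weakly $f$-practical if $f(p_{i+1})\le S_f(m_i)+1$ for every $0\le i<k$. The function $f$ is called convenient if every weakly $f$-practical number is $f$-practical. *)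

(* Defs.v *)
(* arithmetic functions nat -> nat (values on 0 are irrelevant). *)
From mathcomp Require Import all_boot.
Set Implicit Arguments. Unset Strict Implicit. Unset Printing Implicit Defensive.

Definition multiplicative (f : nat -> nat) : Prop :=
  f 1 = 1 /\
  forall a b, 0 < a -> 0 < b -> coprime a b -> f (a * b) = f a * f b.

Definition Sf (f : nat -> nat) (n : nat) : nat := \sum_(d <- divisors n) f d.

Definition f_practical (f : nat -> nat) (n : nat) : Prop :=
  0 < n /\
  forall m, 1 <= m <= Sf f n ->
    exists D : seq nat, [/\ uniq D, {subset D <= divisors n} &
                          m = \sum_(d <- D) f d].

(* n is weakly f-practical: writing the distinct prime factors of n as
   p_1, ..., p_k ordered so that f(p_1) <= ... <= f(p_k), and
   m_i = prod_{j <= i} p_j^{e_j}, we have f(p_{i+1}) <= S_f(m_i) + 1. *)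
Definition weakly_f_practical (f : nat -> nat) (n : nat) : Prop :=
  0 < n /\
  exists s : seq nat,
    [/\ perm_eq s (primes n),
        sorted (fun p q => f p <= f q) s &
        forall i, i < size s ->
          f (nth 0 s i) <=
            Sf f (\prod_(j < i) (nth 0 s j) ^ (logn (nth 0 s j) n)) + 1].

Definition convenient (f : nat -> nat) : Prop :=
  forall n, weakly_f_practical f n -> f_practical f n.

(* Main.v *)
Require Import Defs.
From mathcomp Require Import all_boot.
From mathcomp Require Import zify.
Set Implicit Arguments. Unset Strict Implicit. Unset Printing Implicit Defensive.

Lemma sum_sub (F : nat -> nat) (D L : seq nat) :
  uniq D -> {subset D <= L} -> uniq L ->
  \sum_(d <- D) F d <= \sum_(d <- L) F d.
Proof.
move=> uD sDL uL.
have pe : perm_eq D [seq x <- L | x \in D].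
  apply: uniq_perm => //; first exact: filter_uniq.
  by move=> x; rewrite mem_filter; case xD: (x \in D) => //=; rewrite sDL.
rewrite (perm_big _ pe) big_filter big_mkcond /=.
by apply: leq_sum => i _; case: (i \in D).
Qed.

Lemma le_sum_mem (F : nat -> nat) (D : seq nat) x :
  uniq D -> x \in D -> F x <= \sum_(d <- D) F d.
Proof. by move=> uD xD; rewrite (bigD1_seq x) //= leq_addr. Qed.

Lemma Sf_dvd f a b : 0 < b -> a %| b -> Sf f a <= Sf f b.
Proof.
move=> b0 ab; have a0 : 0 < a by apply: dvdn_gt0 ab.
apply: sum_sub; rewrite ?divisors_uniq // => d.
rewrite -!dvdn_divisors // => da; exact: dvdn_trans ab.
Qed.

Lemma le_Sf f d n : 0 < n -> d %| n -> f d <= Sf f n.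
Proof.
move=> n0 dn; rewrite /Sf -(big_seq1 addn d f).
by apply: sum_sub; rewrite ?divisors_uniq // => x; rewrite inE => /eqP ->; rewrite -dvdn_divisors.
Qed.

Lemma practical_rep f n r : f_practical f n -> r <= Sf f n ->
  exists D : seq nat, [/\ uniq D, {subset D <= divisors n} & r = \sum_(d <- D) f d].
Proof.
case=> n0 H rS; case: r rS => [|r] rS; first by exists [::]; rewrite big_nil.
by apply: H; rewrite rS.
Qed.

Lemma practical1 f : f 1 = 1 -> f_practical f 1.
Proof.
move=> f1; split => // m; rewrite /Sf /= big_seq1 f1 => /andP[m1 m1'].
have -> : m = 1 by lia.
by exists [:: 1]; rewrite big_seq1 f1; split => // x; rewrite inE => /eqP ->.
Qed.
Lemma partn_rcons n (l : seq nat) x : x \notin l ->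
  n`_[pred y in rcons l x] = n`_[pred y in l] * n`_x.
Proof.
move=> xl; case: (posnP n) => [->|n0]; first by rewrite !partn0.
set N := n`_[pred y in rcons l x].
rewrite -(partnC [pred y in l] (part_gt0 _ n : 0 < N)) /N -!partnI.
congr (_ * _); apply: eq_partn => y; rewrite !inE mem_rcons inE.
  by case: (y =P x) => [->|]; rewrite ?(negbTE xl) ?andbb //= andbb.
by case: (y =P x) => [->|] /=; rewrite ?xl ?andbT ?andbF //=; case: (y \in l).
Qed.

Lemma prefix_partn n (s : seq nat) i : uniq s -> i <= size s ->
  \prod_(j < i) (nth 0 s j) ^ (logn (nth 0 s j) n) = n`_[pred y in take i s].
Proof.
move=> us; elim: i => [|i IH] hi.
  rewrite big_ord0 take0; case: (posnP n) => [->|n0]; first by rewrite partn0.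
  by rewrite part_p'nat //; apply/pnatP => // q _ _; rewrite !inE.
rewrite big_ord_recr /= IH ?(ltnW hi) // (take_nth 0 hi) partn_rcons ?p_part //.
rewrite -(cat_take_drop i s) cat_uniq in us; case/and3P: us => _ /hasPn H _.
apply: H; rewrite (drop_nth 0) ?mem_head //.
Qed.

Lemma nth_notin_take (s : seq nat) i : uniq s -> i < size s -> nth 0 s i \notin take i s.
Proof.
move=> us hi; rewrite -(cat_take_drop i s) cat_uniq in us; case/and3P: us => _ /hasPn H _.
by apply: H; rewrite (drop_nth 0) ?mem_head.
Qed.

Section F.
Variable f : nat -> nat.
Hypothesis hm : multiplicative f.
Hypothesis hmon : forall p k, prime p -> 1 <= k -> f (p ^ k.-1) <= f (p ^ k).

Lemma f1 : f 1 = 1. Proof. by case: hm. Qed.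
Lemma fM a b : 0 < a -> 0 < b -> coprime a b -> f (a * b) = f a * f b.
Proof. by case: hm => _; apply. Qed.

Lemma pow_mono p i j : prime p -> i <= j -> f (p ^ i) <= f (p ^ j).
Proof.
move=> pp; elim: j => [|j IH]; first by rewrite leqn0 => /eqP ->.
rewrite leq_eqVlt => /orP[/eqP -> //|]; rewrite ltnS => /IH H.
exact: leq_trans H (hmon pp (ltn0Sn j)).
Qed.

Lemma pow_pos p k : prime p -> 0 < f (p ^ k).
Proof. by move=> pp; have := pow_mono pp (leq0n k); rewrite expn0 f1. Qed.

Lemma f_pos d : 0 < d -> 0 < f d.
Proof.
elim: d {-2}d (leqnn d) => [|N IH] d dN d0; first by case: d dN d0.
case: (ltngtP d 1) => [|d1|->]; [by case: d d0 dN| |by rewrite f1].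
set p := pdiv d; have pp : prime p by apply: pdiv_prime.
rewrite -(partnC p d0) fM ?part_gt0 ?coprime_partC // p_part muln_gt0 pow_pos //=.
apply: IH; last exact: part_gt0.
have : 1 < d`_p by rewrite p_part_gt1 pi_pdiv.
have := partnC p d0; have := part_gt0 p^' d; nia.
Qed.

Lemma f_ge_prime r d : prime r -> r %| d -> 0 < d -> f r <= f d.
Proof.
move=> rp rd d0.
rewrite -(partnC r d0) fM ?part_gt0 ?coprime_partC // p_part.
apply: leq_trans (leq_pmulr _ (f_pos (part_gt0 _ _))).
rewrite -{1}(expn1 r); apply: pow_mono => //.
by rewrite logn_gt0 mem_primes rp d0 rd.
Qed.


Section Step.
Variables (p m : nat).
Hypotheses (pp : prime p) (m0 : 0 < m) (cmp : coprime m p).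

Lemma p_gt0 : 0 < p. Proof. exact: prime_gt0. Qed.

Lemma dec j x : x %| m * p ^ j.+1 ->
  (x %| m * p ^ j) \/ (exists2 d, d %| m & x = d * p ^ j.+1).
Proof.
move=> xd; have x0 : 0 < x by apply: dvdn_gt0 xd; rewrite muln_gt0 m0 expn_gt0 p_gt0.
case pj: (p ^ j.+1 %| x).
  right; exists (x %/ p ^ j.+1); last by rewrite divnK.
  by rewrite -(@dvdn_pmul2r (p ^ j.+1)) ?expn_gt0 ?p_gt0 // divnK.
left; move/negbT: pj; rewrite pfactor_dvdn // -ltnNge ltnS => lj.
rewrite -(partnC p x0) mulnC; apply: dvdn_mul.
  rewrite -(Gauss_dvdl _ (p:=p ^ j.+1)); first by apply: dvdn_trans (dvdn_part _ _) xd.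
  apply: (@pnat_coprime p^'); first exact: part_pnat.
  by rewrite pnatNK pnatX pnat_id.
by rewrite p_part dvdn_exp2l.
Qed.

Lemma notdvd j d : d * p ^ j.+1 %| m * p ^ j -> False.
Proof.
rewrite expnS mulnA dvdn_pmul2r ?expn_gt0 ?p_gt0 // => H.
have pm : p %| m by apply: dvdn_trans H; apply: dvdn_mull.
by move: cmp; rewrite coprime_sym prime_coprime // pm.
Qed.

Lemma fdP j d : d %| m -> f (d * p ^ j.+1) = f d * f (p ^ j.+1).
Proof.
move=> dm; apply: fM; first exact: dvdn_gt0 dm.
  by rewrite expn_gt0 p_gt0.
by apply: coprimeXr; apply: coprime_dvdl dm cmp.
Qed.

Lemma mulP_inj j : injective (fun d => d * p ^ j.+1).
Proof. by move=> a b /eqP; rewrite eqn_pmul2r ?expn_gt0 ?p_gt0 // => /eqP. Qed.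

Lemma mpj_gt0 j : 0 < m * p ^ j.
Proof. by rewrite muln_gt0 m0 expn_gt0 p_gt0. Qed.

Lemma divisors_step j : perm_eq (divisors (m * p ^ j.+1))
  (divisors (m * p ^ j) ++ map (fun d => d * p ^ j.+1) (divisors m)).
Proof.
apply: uniq_perm; first exact: divisors_uniq.
  rewrite cat_uniq divisors_uniq (map_inj_uniq (@mulP_inj j)) divisors_uniq andbT /=.
  apply/hasPn => x /mapP [d]; rewrite -dvdn_divisors // => dm ->.
  by rewrite -dvdn_divisors ?mpj_gt0 //; apply/negP => /notdvd.
move=> x; rewrite mem_cat -!dvdn_divisors ?mpj_gt0 //.
apply/idP/idP.
  move/dec => [->//|[d dm ->]]; apply/orP; right.
  by apply/mapP; exists d; rewrite // -dvdn_divisors.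
case/orP.
  by move=> H; apply: dvdn_trans H _; rewrite dvdn_pmul2l // dvdn_exp2l.
by case/mapP => d; rewrite -dvdn_divisors // => dm ->; rewrite dvdn_pmul2r ?expn_gt0 ?p_gt0.
Qed.

Lemma Sf_step j : Sf f (m * p ^ j.+1) = Sf f (m * p ^ j) + f (p ^ j.+1) * Sf f m.
Proof.
rewrite /Sf (perm_big _ (divisors_step j)) big_cat /= big_map; congr (_ + _).
rewrite big_distrr /= big_seq [in RHS]big_seq; apply: eq_bigr => d.
by rewrite -dvdn_divisors // => dm; rewrite fdP // mulnC.
Qed.

Lemma practical_step j : f_practical f m -> f_practical f (m * p ^ j) ->
  f (p ^ j.+1) <= Sf f (m * p ^ j) + 1 -> f_practical f (m * p ^ j.+1).
Proof.
move=> pm pmj hF; split; first exact: mpj_gt0.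
move=> x /andP[x1]; rewrite Sf_step.
have F0 : 0 < f (p ^ j.+1) := pow_pos j.+1 pp.
move: hF F0; set A := Sf f (m * p ^ j); set F := f (p ^ j.+1); set B := Sf f m => hF F0 xle.
have [t [r [tB rA ->]]] : exists t r, [/\ t <= B, r <= A & x = r + F * t].
  case: (leqP (x %/ F) B) => h.
    exists (x %/ F), (x %% F); split => //.
      have := ltn_pmod x F0; lia.
    by rewrite mulnC addnC -divn_eq.
  have := leq_trunc_div x F.
  exists B, (x - F * B); split => //; nia.
case: (practical_rep pmj rA) => D1 [u1 s1 e1].
case: (practical_rep pm tB) => D2 [u2 s2 e2].
exists (D1 ++ map (fun d => d * p ^ j.+1) D2); split.
- rewrite cat_uniq u1 (map_inj_uniq (@mulP_inj j)) u2 andbT /=.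
  apply/hasPn => y /mapP [d dD ->]; apply/negP => /s1.
  by rewrite -dvdn_divisors ?mpj_gt0 // => /notdvd.
- move=> y; rewrite mem_cat -dvdn_divisors ?mpj_gt0 //; case/orP.
    move/s1; rewrite -dvdn_divisors ?mpj_gt0 // => H; apply: dvdn_trans H _.
    by rewrite dvdn_pmul2l // dvdn_exp2l.
  case/mapP => d /s2; rewrite -dvdn_divisors // => dm ->.
  by rewrite dvdn_pmul2r ?expn_gt0 ?p_gt0.
- rewrite big_cat big_map /= -e1 e2 big_distrr /=; congr (_ + _).
  rewrite big_seq [in RHS]big_seq; apply: eq_bigr => d /s2.
  by rewrite -dvdn_divisors // => dm; rewrite fdP // mulnC.
Qed.

Lemma practical_pow : f_practical f m ->
  (forall k, f (p ^ k.+1) <= Sf f (m * p ^ k) + 1) ->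
  forall e, f_practical f (m * p ^ e).
Proof.
move=> pm H; elim => [|e IH]; first by rewrite expn0 muln1.
exact: practical_step.
Qed.
End Step.

Lemma lemmaB n t : f_practical f n -> t <= Sf f n + 1 ->
  t <= Sf f (n`_[pred r | f r < t]) + 1.
Proof.
move=> pn ht; rewrite leqNgt; apply/negP => hlt.
case: (pn) => n0 _.
have VS : Sf f (n`_[pred r | f r < t]) + 1 <= Sf f n.
  by move: (leq_trans hlt ht); rewrite !addn1 ltnS.
case: (practical_rep pn VS) => D [uD sD eD].
have sub : {subset D <= divisors (n`_[pred r | f r < t])}.
  move=> d dD; have dn : d %| n by rewrite dvdn_divisors // sD.
  have d0 := dvdn_gt0 n0 dn.
  have fd : f d < t.
    by apply: leq_ltn_trans (le_sum_mem f uD dD) _; rewrite -eD.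
  rewrite -dvdn_divisors ?part_gt0 //.
  rewrite -(@part_pnat_id [pred r | f r < t] d); first exact: partn_dvd.
  apply/pnatP => // q qp qd; rewrite inE; exact: leq_ltn_trans (f_ge_prime qp qd d0) fd.
move: (sum_sub f uD sub (divisors_uniq _)); rewrite -eD -/(Sf f _) addn1 ltnn //.
Qed.

Lemma SC_weakly n : 0 < n ->
  (forall q, prime q -> q %| n -> f q <= Sf f (n`_[pred r | f r < f q]) + 1) ->
  weakly_f_practical f n.
Proof.
move=> n0 H; split => //.
have tR : total (fun p q => f p <= f q) by move=> a b; apply: leq_total.
have pe : perm_eq (sort (fun p q => f p <= f q) (primes n)) (primes n) by rewrite perm_sort.
exists (sort (fun p q => f p <= f q) (primes n)); split => //; first exact: sort_sorted.
move=> i hi; move: pe hi; set s := sort _ _ => pe hi.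
have us : uniq s by rewrite (perm_uniq pe) primes_uniq.
rewrite (prefix_partn n us (ltnW hi)).
have qs : nth 0 s i \in s by apply: mem_nth.
have := qs; rewrite (perm_mem pe) mem_primes => /and3P [qp _ qd].
apply: leq_trans (H _ qp qd) _; rewrite leq_add2r.
apply: Sf_dvd; first exact: part_gt0.
apply: sub_in_partn => r rn; rewrite !inE => frq.
have rs : r \in s by rewrite (perm_mem pe).
rewrite in_take // ltnNge; apply/negP => ir.
have := @sorted_leq_nth _ (fun p q => f p <= f q) (fun y x z => @leq_trans (f y) (f x) (f z)) (fun x => leqnn (f x)) 0 s (sort_sorted tR (primes n)) i (index r s).
rewrite !inE hi index_mem rs nth_index // => /(_ isT isT ir) h.
by move: (leq_ltn_trans h frq); rewrite ltnn.
Qed.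

Lemma main_fwd : convenient f ->
   (forall p m, prime p -> f_practical f m -> coprime m p ->
      f p <= Sf f m + 1 ->
      forall k, f (p ^ k.+1) <= Sf f (m * p ^ k) + 1).
Proof.
move=> conv p m pp pm cmp hp k.
have m0 : 0 < m by case: pm.
have n0 : 0 < m * p ^ k.+1 by apply: mpj_gt0.
have wn : weakly_f_practical f (m * p ^ k.+1).
  apply: SC_weakly => // q qp qn.
  have hq : f q <= Sf f m + 1.
    move: qn; rewrite Euclid_dvdM // => /orP [qm|].
      exact: leq_trans (le_Sf f m0 qm) (leq_addr 1 _).
    by rewrite Euclid_dvdX // andbT dvdn_prime2 // => /eqP ->.
  apply: leq_trans (lemmaB pm hq) _; rewrite leq_add2r; apply: Sf_dvd; first exact: part_gt0.
  by apply: partn_dvd => //; apply: dvdn_mulr.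
have pn := conv _ wn.
rewrite leqNgt; apply/negP => hlt.
have B1 : 1 <= Sf f m by have := le_Sf f m0 (dvd1n m); rewrite f1.
have VS : Sf f (m * p ^ k) + 1 <= Sf f (m * p ^ k.+1).
  rewrite Sf_step // leq_add2l; apply: leq_trans (pow_pos k.+1 pp) _.
  by rewrite -{1}(muln1 (f _)) leq_mul2l B1 orbT.
case: (practical_rep pn VS) => D [uD sD eD].
have sub : {subset D <= divisors (m * p ^ k)}.
  move=> d dD; have := sD d dD; rewrite -dvdn_divisors // => /(dec pp m0) [dd|[d' d'm ed]].
    by rewrite -dvdn_divisors // mpj_gt0.
  have := le_sum_mem f uD dD; rewrite -eD ed (fdP pp m0 cmp _ d'm).
  have := f_pos (dvdn_gt0 m0 d'm) => fd' h2.
  have h3 : f (p ^ k.+1) <= f d' * f (p ^ k.+1) by rewrite leq_pmull.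
  by move: (leq_trans (leq_trans hlt h3) h2); rewrite ltnn.
move: (sum_sub f uD sub (divisors_uniq _)); rewrite -eD -/(Sf f _) addn1 ltnn //.
Qed.

Lemma main_bwd :
   (forall p m, prime p -> f_practical f m -> coprime m p ->
      f p <= Sf f m + 1 ->
      forall k, f (p ^ k.+1) <= Sf f (m * p ^ k) + 1) -> convenient f.
Proof.
move=> C n [n0 [s [pe srt H]]].
have us : uniq s by rewrite (perm_uniq pe) primes_uniq.
suff P : forall i, i <= size s -> f_practical f (n`_[pred y in take i s]).
  move: (P (size s) (leqnn _)); rewrite take_size.
  rewrite (@eq_partn _ \pi(n)) ?partn_pi // => y.
  by rewrite !inE (perm_mem pe).
elim => [|i IH] hi.
  by rewrite -(prefix_partn n us (leq0n _)) big_ord0; apply: practical1; exact: f1.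
rewrite -(prefix_partn n us hi) big_ord_recr /= (prefix_partn n us (ltnW hi)).
have xs : nth 0 s i \in s by apply: mem_nth.
have := xs; rewrite (perm_mem pe) mem_primes => /and3P [xp _ xd].
have pM := IH (ltnW hi).
have cop : coprime n`_[pred y in take i s] (nth 0 s i).
  apply: (@pnat_coprime [pred y in take i s]); first exact: part_pnat.
  by rewrite pnatE // inE /= inE nth_notin_take.
apply: (practical_pow xp (part_gt0 _ _) cop pM).
apply: C => //.
by move: (H i hi); rewrite (prefix_partn n us (ltnW hi)).
Qed.
End F.

Theorem theorem3p3 (f : nat -> nat) :
  multiplicative f ->
  (forall p k, prime p -> 1 <= k -> f (p ^ k.-1) <= f (p ^ k)) ->
  (convenient f <->
   (forall p m, prime p -> f_practical f m -> coprime m p ->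
      f p <= Sf f m + 1 ->
      forall k, f (p ^ k.+1) <= Sf f (m * p ^ k) + 1)).
Proof.
move=> hm hmon; split; [exact: main_fwd | exact: main_bwd].
Qed.
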